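(* For every integer $n\ge1$: $$\beta(n)^2=\sum_{dk=n}d\,2^{\omega(d)}\lambda(d)\,\sigma_2(k),\qquad \beta(n^2)=\sum_{dk=n}d\,\mu(d)\,\sigma_2(k),\qquad \beta(n)\sigma(n)=\sum_{d^2k=n}d^2\,2^{\omega(d)}\beta_2(k),$$ where the sums run over pairs of positive integers $(d,k)$ with the indicated product equal to $n$.
   Context: $\lambda$ is the Liouville function, $\mu$ the Möbius function, $\omega(n)$ the number of distinct prime factors of $n$. $\beta(n)=\sum_{d\mid n}d\,\lambda(n/d)$, $\beta_2(n)=\sum_{d\mid n}d^2\lambda(n/d)$, $\sigma(n)=\sum_{d\mid n}d$, $\sigma_2(n)=\sum_{d\mid n}d^2$. *)

(* Defs.v *)
From HB Require Import structures.
From mathcomp Require Import all_boot all_order all_algebra.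
Set Implicit Arguments. Unset Strict Implicit. Unset Printing Implicit Defensive.
Import Order.TTheory GRing.Theory Num.Theory.
Local Open Scope ring_scope.

Definition bigOmega (n : nat) : nat := (\sum_(p <- primes n) logn p n)%N.
Definition omega (n : nat) : nat := size (primes n).
Definition liouville (n : nat) : int := (-1) ^+ bigOmega n.
Definition moebius (n : nat) : int :=
  if [forall p : 'I_n.+1, prime p ==> ~~ (p * p %| n)%N]
  then (-1) ^+ omega n else 0.
Definition beta (n : nat) : int :=
  \sum_(d <- divisors n) (d%:Z * liouville (n %/ d)%N).
Definition beta2 (n : nat) : int :=
  \sum_(d <- divisors n) ((d ^ 2)%N%:Z * liouville (n %/ d)%N).
Definition sigma (n : nat) : int := \sum_(d <- divisors n) d%:Z.
Definition sigma2 (n : nat) : int := \sum_(d <- divisors n) (d ^ 2)%N%:Z.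

(* Main.v *)
Require Import Defs.
From HB Require Import structures.
From mathcomp Require Import all_boot all_order all_algebra.
From mathcomp Require Import ring zify.
Import Order.TTheory GRing.Theory Num.Theory.
Local Open Scope ring_scope.

Section Poly.
Variable x : int.
Definition Bq k := \sum_(i < k.+1) x ^+ i * (-1) ^+ (k - i).
Definition Sq k := \sum_(i < k.+1) (x ^+ i) ^+ 2.
Definition Gq k := \sum_(i < k.+1) x ^+ i.
Definition B2q k := \sum_(i < k.+1) (x ^+ i) ^+ 2 * (-1) ^+ (k - i).

Lemma sgn_step k (i : 'I_k.+1) : (-1 : int) ^+ (k.+1 - i) = - (-1) ^+ (k - i).
Proof. by rewrite subSn ?exprS ?mulN1r // -ltnS. Qed.

Lemma BqS k : Bq k.+1 = x ^+ k.+1 - Bq k.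
Proof.
rewrite /Bq big_ord_recr /= subnn expr0 mulr1 addrC; congr (_ + _).
rewrite -sumrN; apply: eq_bigr => i _; by rewrite sgn_step mulrN.
Qed.

Lemma B2qS k : B2q k.+1 = (x ^+ k.+1) ^+ 2 - B2q k.
Proof.
rewrite /B2q big_ord_recr /= subnn expr0 mulr1 addrC; congr (_ + _).
rewrite -sumrN; apply: eq_bigr => i _; by rewrite sgn_step mulrN.
Qed.

Lemma SqS k : Sq k.+1 = Sq k + (x ^+ k.+1) ^+ 2.
Proof. by rewrite /Sq big_ord_recr. Qed.
Lemma GqS k : Gq k.+1 = Gq k + x ^+ k.+1.
Proof. by rewrite /Gq big_ord_recr. Qed.
Lemma Bq0 : Bq 0 = 1. Proof. by rewrite /Bq big_ord_recr big_ord0 /= add0r mulr1. Qed.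
Lemma B2q0 : B2q 0 = 1. Proof. by rewrite /B2q big_ord_recr big_ord0 /= add0r mulr1 expr1n. Qed.
Lemma Sq0 : Sq 0 = 1. Proof. by rewrite /Sq big_ord_recr big_ord0 /= add0r expr1n. Qed.
Lemma Gq0 : Gq 0 = 1. Proof. by rewrite /Gq big_ord_recr big_ord0 /= add0r. Qed.

Lemma Bq_closed k : (1 + x) * Bq k = x ^+ k.+1 + (-1) ^+ k.
Proof.
elim: k => [|k IH]; first by rewrite Bq0 expr1 expr0 mulr1 addrC.
rewrite BqS mulrBr IH !exprS; ring.
Qed.

Lemma B2q_closed k : (1 + x ^+ 2) * B2q k = (x ^+ k.+1) ^+ 2 + (-1) ^+ k.
Proof.
elim: k => [|k IH]; first by rewrite B2q0 expr1 expr0 mulr1 addrC.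
rewrite B2qS mulrBr IH !exprS; ring.
Qed.

Lemma Gq_closed k : (x - 1) * Gq k = x ^+ k.+1 - 1.
Proof.
elim: k => [|k IH]; first by rewrite Gq0 expr1 mulr1.
rewrite GqS mulrDr IH !exprS; ring.
Qed.

Definition Tq k := \sum_(i < k.+1) (-1) ^+ i * x ^+ i * Sq (k - i).

Lemma TqS k : Tq k.+1 = Sq k.+1 - x * Tq k.
Proof.
rewrite /Tq big_ord_recl /= !expr0 !mulr1 subn0 mul1r; congr (_ + _).
rewrite mulr_sumr -sumrN; apply: eq_bigr => i _.
rewrite /bump /= add1n subSS !exprS; ring.
Qed.

Lemma Tq_aux j : (1 + x) * Tq j = Sq j + x ^+ j.+1 * Bq j.
Proof.
elim: j => [|j IH].
  by rewrite /Tq big_ord_recr big_ord0 /= Bq0 Sq0; ring.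
rewrite TqS mulrBr SqS BqS.
have -> : (1 + x) * (x * Tq j) = x * ((1 + x) * Tq j) by ring.
rewrite IH !exprS; ring.
Qed.

Lemma ident1 k : Bq k ^+ 2 = 2 * Tq k - Sq k.
Proof.
elim: k => [|k IH].
  by rewrite /Tq big_ord_recr big_ord0 /= Bq0 Sq0; ring.
have HT := Tq_aux k.
rewrite TqS SqS BqS.
transitivity ((x ^+ k.+1) ^+ 2 - 2 * x ^+ k.+1 * Bq k + Bq k ^+ 2); first ring.
rewrite IH.
transitivity ((x ^+ k.+1) ^+ 2 + Sq k - 2 * x * Tq k
   + 2 * ((1 + x) * Tq k - Sq k - x ^+ k.+1 * Bq k)); first ring.
rewrite HT; ring.
Qed.

Lemma ident2 k : Bq (k + k).+2 = Sq k.+1 - x * Sq k.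
Proof.
elim: k => [|k IH].
  by rewrite !BqS Bq0 SqS Sq0; ring.
rewrite addSn addnS BqS BqS IH !SqS !exprS exprD; ring.
Qed.

Definition Uq k := \sum_(i < k.+1) (if (i + i <= k)%N then (x ^+ i) ^+ 2 * B2q (k - (i + i)) else 0).

Lemma UqSS k : Uq k.+2 = B2q k.+2 + x ^+ 2 * Uq k.
Proof.
rewrite /Uq big_ord_recl /= subn0 expr0 expr1n mul1r; congr (_ + _).
rewrite big_ord_recr /= addnS addSn ltnS ltnS.
have -> : (k.+1 + k.+1 <= k)%N = false.
  by apply/negbTE; lia.
rewrite addr0 mulr_sumr; apply: eq_bigr => i _.
rewrite /bump /= add1n addnS addSn !ltnS subSS.
case: ifP => _; last by rewrite mulr0.
rewrite subSS (exprS x i); ring.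
Qed.

Lemma Uq0 : Uq 0 = B2q 0.
Proof. by rewrite /Uq big_ord_recr big_ord0 /= add0r expr0 expr1n mul1r. Qed.
Lemma Uq1 : Uq 1 = B2q 1.
Proof. by rewrite /Uq big_ord_recr big_ord_recr big_ord0 /= add0r addr0 expr0 expr1n mul1r. Qed.

Lemma ident3 k : Bq k * Gq k = 2 * Uq k - B2q k.
Proof.
suff : Bq k * Gq k = 2 * Uq k - B2q k /\ Bq k.+1 * Gq k.+1 = 2 * Uq k.+1 - B2q k.+1 by case.
elim: k => [|k [IH1 IH2]].
  split; first by rewrite Bq0 Gq0 Uq0 B2q0; ring.
  by rewrite Uq1 BqS GqS B2qS Bq0 Gq0 B2q0; ring.
split => //.
have HB := Bq_closed k; have HG := Gq_closed k; have H2 := B2q_closed k.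
rewrite UqSS !BqS !GqS !B2qS -BqS -GqS -B2qS BqS GqS B2qS.
have HU : 2 * Uq k = Bq k * Gq k + B2q k by rewrite IH1; ring.
rewrite !exprS in HB HG H2 *.
set y := x ^+ k in HB HG H2 HU *.
set e := (-1) ^+ k in HB HG H2 *.
transitivity (2 * x ^+ 2 * Uq k + (x * (x * y)) ^+ 2 - (x * y) ^+ 2 + B2q k
   + (-((1 + x) * Bq k) * ((x - 1) * Gq k) + (x * y) * ((1 + x) * Bq k)
      + (x * y) * ((x - 1) * Gq k) - (1 + x * (x * 1)) * B2q k)
   - (x * (x * 1)) * (2 * Uq k - Bq k * Gq k - B2q k)); first ring.
rewrite HB HG H2 HU; ring.
Qed.
End Poly.

Lemma PoszX m n : ((m ^ n)%N)%:Z = (m%:Z) ^+ n.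
Proof. by rewrite -!natz natrX. Qed.

Lemma coprime_gcd_split m n d : coprime m n -> (d %| m * n)%N ->
  d = (gcdn d m * gcdn d n)%N.
Proof.
move=> co dmn; apply/eqP; rewrite eqn_dvd; apply/andP; split; last first.
  rewrite Gauss_dvd ?dvdn_gcdl //.
  exact: coprime_dvdl (dvdn_gcdr _ _) (coprime_dvdr (dvdn_gcdr _ _) co).
have Hd : gcdn d (m * n) = d by apply/gcdn_idPl.
have gd : (gcdn d (m * n) %| d)%N by apply: dvdn_gcdl.
have gmn : (gcdn d (m * n) %| m * n)%N by apply: dvdn_gcdr.
rewrite -{1}Hd muln_gcdr !muln_gcdl !dvdn_gcd.
by rewrite gmn (dvdn_mulr _ gd) (dvdn_mull _ gd) (dvdn_mulr _ gd).
Qed.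

Lemma coprime_divisors_sum m n (F : nat -> int) : (0 < m)%N -> (0 < n)%N ->
  coprime m n ->
  \sum_(d <- divisors (m * n)) F d =
  \sum_(a <- divisors m) \sum_(b <- divisors n) F (a * b)%N.
Proof.
move=> m0 n0 co.
have inj : {in [seq (a, b) | a <- divisors m, b <- divisors n] &,
            injective (uncurry muln)}.
  move=> [a b] [a' b'] /allpairsP [[a1 b1] [/= Ha Hb [-> ->]]]
    /allpairsP [[a2 b2] [/= Ha' Hb' [-> ->]]] /= E.
  rewrite -!dvdn_divisors // in Ha Hb Ha' Hb'.
  have ea : forall a b, (a %| m)%N -> (b %| n)%N -> gcdn (a * b) m = a.
    move=> a0 b0 am bn; rewrite gcdnC Gauss_gcdl; first exact/gcdn_idPr.
    exact: coprime_dvdr bn co.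
  have eb : forall a b, (a %| m)%N -> (b %| n)%N -> gcdn (a * b) n = b.
    move=> a0 b0 am bn; rewrite gcdnC Gauss_gcdr; first exact/gcdn_idPr.
    by rewrite coprime_sym; apply: coprime_dvdl am co.
  have h1 := ea a1 b1 Ha Hb; have h2 := eb a1 b1 Ha Hb.
  by rewrite E ea // in h1; rewrite E eb // in h2; rewrite h1 h2.
have pe : perm_eq (divisors (m * n)) [seq (a * b)%N | a <- divisors m, b <- divisors n].
  apply: uniq_perm; first exact: divisors_uniq.
    by apply: allpairs_uniq => //; apply: divisors_uniq.
  move=> d; rewrite -dvdn_divisors ?muln_gt0 ?m0 //.
  apply/idP/allpairsP.
    move=> dmn; exists (gcdn d m, gcdn d n); rewrite /= -!dvdn_divisors //.
    by rewrite !dvdn_gcdr; split=> //; apply: coprime_gcd_split.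
  by move=> [[a b] /= [Ha Hb ->]]; apply: dvdn_mul; rewrite dvdn_divisors.
rewrite (perm_big _ pe) /=.
rewrite -(map_allpairs (uncurry muln) (@pair nat nat)) big_map.
by rewrite big_allpairs.
Qed.

Definition mult (f : nat -> int) :=
  f 1%N = 1 /\ forall m n, (0 < m)%N -> (0 < n)%N -> coprime m n -> f (m * n)%N = f m * f n.

Lemma divisors1 : divisors 1 = [:: 1%N].
Proof. by []. Qed.

Lemma gsum_mult (F : nat -> nat -> int) :
  F 1%N 1%N = 1 ->
  (forall m n a b, (0 < m)%N -> (0 < n)%N -> coprime m n -> (a %| m)%N -> (b %| n)%N ->
      F (a * b)%N (m * n)%N = F a m * F b n) ->
  mult (fun n => \sum_(d <- divisors n) F d n).
Proof.
move=> F1 FM; split; first by rewrite divisors1 big_seq1.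
move=> m n m0 n0 co; rewrite coprime_divisors_sum // big_distrl /=.
apply: eq_big_seq => a; rewrite -dvdn_divisors // => am.
rewrite big_distrr /=; apply: eq_big_seq => b; rewrite -dvdn_divisors // => bn.
exact: FM.
Qed.

Lemma divn_mul2 m n a b : (a %| m)%N -> (b %| n)%N -> (0 < a)%N -> (0 < b)%N ->
  ((m * n) %/ (a * b) = (m %/ a) * (n %/ b))%N.
Proof.
move=> am bn a0 b0.
rewrite -{1}(divnK am) -{1}(divnK bn).
rewrite mulnACA mulnK // muln_gt0 a0 b0 //.
Qed.

Lemma conv_mult f g : mult f -> mult g ->
  mult (fun n => \sum_(d <- divisors n) f d * g (n %/ d)%N).
Proof.
move=> [f1 fM] [g1 gM]; apply: (gsum_mult (fun d n => f d * g (n %/ d)%N)).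
  by rewrite f1 g1 mulr1.
move=> m n a b m0 n0 co am bn.
have a0 := dvdn_gt0 m0 am; have b0 := dvdn_gt0 n0 bn.
rewrite divn_mul2 // fM // ?gM //.
- by rewrite mulrACA.
- by rewrite divn_gt0 // dvdn_leq.
- by rewrite divn_gt0 // dvdn_leq.
- exact: coprime_dvdl (dvdn_div am) (coprime_dvdr (dvdn_div bn) co).
- exact: coprime_dvdl am (coprime_dvdr bn co).
Qed.

Lemma mult_eq f g : mult f -> mult g ->
  (forall p k, prime p -> (0 < k)%N -> f (p ^ k)%N = g (p ^ k)%N) ->
  forall n, (0 < n)%N -> f n = g n.
Proof.
move=> [f1 fM] [g1 gM] H n; elim/ltn_ind: n => n IH n0.
have [n1|n1] := leqP n 1.
  have e1 : n = 1%N by lia.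
  by rewrite e1 f1 g1.
set p := pdiv n.
have pp : prime p by apply: pdiv_prime.
have pin : p \in primes n by rewrite mem_primes pp n0 pdiv_dvd.
have e := partnC p n0.
have lg : (0 < logn p n)%N by rewrite logn_gt0.
have hp : (1 < (n`_p)%N)%N by rewrite p_part -{1}(expn0 p) ltn_exp2l ?prime_gt1.
rewrite -e fM ?gM ?part_gt0 ?coprime_partC // p_part H //; congr (_ * _).
apply: IH; last exact: part_gt0.
rewrite -{2}e -{1}(mul1n (n`_p^')%N) ltn_pmul2r ?part_gt0 //.
Qed.

Lemma sum_divisors_pow p k (F : nat -> int) : prime p ->
  \sum_(d <- divisors (p ^ k)) F d = \sum_(i < k.+1) F (p ^ i)%N.
Proof.
move=> pp.
have p1 := prime_gt1 pp.
have pe : perm_eq (divisors (p ^ k)) [seq (p ^ i)%N | i <- iota 0 k.+1].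
  apply: uniq_perm; first exact: divisors_uniq.
    by rewrite map_inj_uniq ?iota_uniq //; apply: expnI.
  move=> d; rewrite -dvdn_divisors ?expn_gt0 ?prime_gt0 //.
  apply/(dvdn_pfactor _ _ pp)/mapP => [[i ik ->]|[i]].
    by exists i => //; rewrite mem_iota.
  by rewrite mem_iota => /andP[_ ik] ->; exists i.
by rewrite (perm_big _ pe) big_map -(big_mkord xpredT (fun i => F (p ^ i)%N)) /index_iota subn0.
Qed.

Lemma primes_coprime_perm m n : (0 < m)%N -> (0 < n)%N -> coprime m n ->
  perm_eq (primes (m * n)) (primes m ++ primes n).
Proof.
move=> m0 n0 co; apply: uniq_perm; first exact: primes_uniq.
  rewrite cat_uniq !primes_uniq /= andbT; apply/hasPn => p /= pn.
  apply/negP => pm; move: pm pn; rewrite !mem_primes => /and3P[pp _ pm] /and3P[_ _ pn].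
  have := coprime_dvdl pm co; rewrite prime_coprime // => /negP; exact.
by move=> p; rewrite primesM // mem_cat.
Qed.

Lemma omegaM m n : (0 < m)%N -> (0 < n)%N -> coprime m n ->
  omega (m * n) = (omega m + omega n)%N.
Proof. by move=> m0 n0 co; rewrite /omega (perm_size (primes_coprime_perm _ _ m0 n0 co)) size_cat. Qed.

Lemma omega_pow p k : prime p -> (0 < k)%N -> omega (p ^ k) = 1%N.
Proof. by move=> pp k0; rewrite /omega primesX // primes_prime. Qed.

Lemma omega1 : omega 1 = 0%N. Proof. by []. Qed.

Lemma bigOmegaM m n : (0 < m)%N -> (0 < n)%N -> coprime m n ->
  bigOmega (m * n) = (bigOmega m + bigOmega n)%N.
Proof.
move=> m0 n0 co; rewrite /bigOmega (perm_big _ (primes_coprime_perm _ _ m0 n0 co)) big_cat /=.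
congr (_ + _)%N; apply: eq_big_seq => p pin; rewrite lognM //.
  have : p \notin primes n.
    move: pin; rewrite !mem_primes => /and3P[pp _ pm]; apply/negP => /and3P[_ _ pn].
    by have := coprime_dvdl pm co; rewrite prime_coprime // pn.
  by rewrite -logn_gt0 -eqn0Ngt => /eqP ->; rewrite addn0.
have : p \notin primes m.
  move: pin; rewrite !mem_primes => /and3P[pp _ pn]; apply/negP => /and3P[_ _ pm].
  by have := coprime_dvdl pm co; rewrite prime_coprime // pn.
by rewrite -logn_gt0 -eqn0Ngt => /eqP ->.
Qed.

Lemma bigOmega1 : bigOmega 1 = 0%N.
Proof. by rewrite /bigOmega /= big_nil. Qed.

Lemma bigOmega_pow p k : prime p -> bigOmega (p ^ k) = k.
Proof.
move=> pp; case: k => [|k]; first by rewrite expn0 bigOmega1.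
by rewrite /bigOmega primesX // primes_prime // big_seq1 lognX logn_prime // eqxx muln1.
Qed.

Lemma liouville_mult : mult liouville.
Proof.
split; first by rewrite /liouville bigOmega1.
by move=> m n m0 n0 co; rewrite /liouville bigOmegaM // exprD.
Qed.

Lemma liouville_pow p k : prime p -> liouville (p ^ k) = (-1) ^+ k.
Proof. by move=> pp; rewrite /liouville bigOmega_pow. Qed.

Lemma sqfP n : (0 < n)%N ->
  reflect (forall p, prime p -> ~~ (p * p %| n)%N)
          [forall p : 'I_n.+1, prime p ==> ~~ (p * p %| n)%N].
Proof.
move=> n0; apply: (iffP forallP) => H.
  move=> p pp; apply/negP => ppn.
  have pn : (p < n.+1)%N.
    rewrite ltnS; apply: leq_trans (dvdn_leq n0 ppn).
    by rewrite leq_pmull // prime_gt0.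
  by have := H (Ordinal pn); rewrite /= pp ppn.
by move=> p; apply/implyP; apply: H.
Qed.

Lemma sqfM m n : (0 < m)%N -> (0 < n)%N -> coprime m n ->
  [forall p : 'I_(m * n).+1, prime p ==> ~~ (p * p %| m * n)%N] =
  [forall p : 'I_m.+1, prime p ==> ~~ (p * p %| m)%N] &&
  [forall p : 'I_n.+1, prime p ==> ~~ (p * p %| n)%N].
Proof.
move=> m0 n0 co.
have mn0 : (0 < m * n)%N by rewrite muln_gt0 m0.
apply/idP/andP => [/(sqfP _ mn0) H|[/(sqfP _ m0) Hm /(sqfP _ n0) Hn]].
  split; apply/sqfP => // p pp; apply/negP => h; have := H p pp.
    by rewrite dvdn_mulr.
  by rewrite dvdn_mull.
apply/(sqfP _ mn0) => p pp; apply/negP => h.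
have : (p %| m * n)%N by apply: dvdn_trans h; apply: dvdn_mulr.
rewrite Euclid_dvdM // => /orP[pm|pn].
  have cpn : coprime (p * p) n by rewrite coprimeMl (coprime_dvdl pm co).
  by move: h; rewrite Gauss_dvdl // => h; have := Hm p pp; rewrite h.
have cpm : coprime (p * p) m by rewrite coprimeMl coprime_sym (coprime_dvdr pn co).
by move: h; rewrite Gauss_dvdr // => h; have := Hn p pp; rewrite h.
Qed.

Lemma moebius1 : moebius 1 = 1.
Proof.
rewrite /moebius; case: (sqfP _ (ltn0Sn 0)) => [_|H]; first by rewrite omega1.
exfalso; apply: H => p pp; apply/negP => h.
have := dvdn_leq (ltn0Sn 0) h; have := prime_gt1 pp; nia.
Qed.

Lemma moebius_mult : mult moebius.
Proof.
split; first exact: moebius1.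
move=> m n m0 n0 co; rewrite /moebius sqfM // omegaM // exprD.
have gen : forall (a b : bool) (x y : int),
  (if a && b then x * y else 0) = (if a then x else 0) * (if b then y else 0).
  by case; case=> x y; rewrite ?mulr0 ?mul0r.
exact: gen.
Qed.

Lemma moebius_pow p k : prime p ->
  moebius (p ^ k) = if k == 0%N then 1 else if k == 1%N then -1 else 0.
Proof.
move=> pp; have p0 := prime_gt0 pp.
have pk0 : (0 < p ^ k)%N by rewrite expn_gt0 p0.
case: k pk0 => [|[|k]] pk0 /=; first by rewrite expn0 moebius1.
  rewrite /moebius expn1; case: (sqfP _ (prime_gt0 pp)) => [_|H].
    by rewrite /omega primes_prime.
  exfalso; apply: H => q qp; apply/negP => h.
  have qp' : (q %| p)%N by apply: dvdn_trans h; apply: dvdn_mulr.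
  rewrite dvdn_prime2 // in qp'; move/eqP: qp' => E; subst q.
  have := dvdn_leq p0 h; have := prime_gt1 pp; nia.
rewrite /moebius; case: (sqfP _ pk0) => [H|//].
exfalso; have := H p pp; by rewrite !expnS mulnA dvdn_mulr.
Qed.

Lemma mult_ext f g : (forall n, f n = g n) -> mult f -> mult g.
Proof. by move=> e [f1 fM]; split; [rewrite -e | move=> m n *; rewrite -!e; apply: fM]. Qed.

Lemma idZ_mult : mult (fun n => n%:Z).
Proof. by split => // m n *; rewrite PoszM. Qed.
Lemma sqZ_mult : mult (fun n => (n ^ 2)%N%:Z).
Proof. by split => // m n *; rewrite expnMn PoszM. Qed.
Lemma one_mult : mult (fun _ => 1).
Proof. by split => // *; rewrite mulr1. Qed.
Lemma prod_mult f g : mult f -> mult g -> mult (fun n => f n * g n).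
Proof.
move=> [f1 fM] [g1 gM]; split; first by rewrite f1 g1 mulr1.
by move=> m n m0 n0 co; rewrite fM ?gM //; rewrite mulrACA.
Qed.
Lemma sqarg_mult f : mult f -> mult (fun n => f (n * n)%N).
Proof.
move=> [f1 fM]; split => // m n m0 n0 co.
rewrite mulnACA fM ?muln_gt0 ?m0 ?n0 //.
by rewrite coprimeMl !coprimeMr co.
Qed.
Lemma p2o_mult : mult (fun n => (2 ^ omega n)%N%:Z).
Proof. by split; [rewrite omega1 | move=> m n *; rewrite omegaM // expnD PoszM]. Qed.

Lemma beta_mult : mult beta.
Proof. by apply: (mult_ext _ _ ^~ (conv_mult _ _ idZ_mult liouville_mult)) => n. Qed.
Lemma beta2_mult : mult beta2.
Proof. by apply: (mult_ext _ _ ^~ (conv_mult _ _ sqZ_mult liouville_mult)) => n. Qed.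
Lemma sigma_mult : mult sigma.
Proof.
apply: (mult_ext _ _ ^~ (conv_mult _ _ idZ_mult one_mult)) => n.
by rewrite /sigma; apply: eq_bigr => d _; rewrite mulr1.
Qed.
Lemma sigma2_mult : mult sigma2.
Proof.
apply: (mult_ext _ _ ^~ (conv_mult _ _ sqZ_mult one_mult)) => n.
by rewrite /sigma2; apply: eq_bigr => d _; rewrite mulr1.
Qed.

Section PP.
Variables (p : nat) (pp : prime p).
Let x := p%:Z.
Let p0 := prime_gt0 pp.

Lemma divpow k (i : 'I_k.+1) : (p ^ k %/ p ^ i)%N = (p ^ (k - i))%N.
Proof. by rewrite expnB // -ltnS. Qed.

Lemma beta_pow k : beta (p ^ k) = Bq x k.
Proof.
rewrite /beta sum_divisors_pow //; apply: eq_bigr => i _.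
by rewrite divpow liouville_pow // PoszX.
Qed.
Lemma beta2_pow k : beta2 (p ^ k) = B2q x k.
Proof.
rewrite /beta2 sum_divisors_pow //; apply: eq_bigr => i _.
by rewrite divpow liouville_pow // !PoszX.
Qed.
Lemma sigma_pow k : sigma (p ^ k) = Gq x k.
Proof. by rewrite /sigma sum_divisors_pow //; apply: eq_bigr => i _; rewrite PoszX. Qed.
Lemma sigma2_pow k : sigma2 (p ^ k) = Sq x k.
Proof. by rewrite /sigma2 sum_divisors_pow //; apply: eq_bigr => i _; rewrite !PoszX. Qed.
Lemma p2o_pow i : (2 ^ omega (p ^ i))%N%:Z = if i == 0%N then 1 else 2.
Proof. by case: i => [|i]; rewrite ?expn0 ?omega1 // omega_pow. Qed.
End PP.

Lemma id1 n : (0 < n)%N -> beta n ^+ 2 =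
        \sum_(d <- divisors n)
           (d%:Z * (2 ^ omega d)%N%:Z * liouville d * sigma2 (n %/ d)%N).
Proof.
pose h := fun d : nat => d%:Z * (2 ^ omega d)%N%:Z * liouville d.
have hm : mult h by apply: prod_mult; [apply: prod_mult; [exact: idZ_mult|exact: p2o_mult]|exact: liouville_mult].
have := mult_eq _ _ (prod_mult _ _ beta_mult beta_mult) (conv_mult _ _ hm sigma2_mult).
rewrite expr2; apply => p k pp k0 {n}.
rewrite /h beta_pow // sum_divisors_pow // -expr2 ident1.
set x := p%:Z.
transitivity (\sum_(i < k.+1) (if (i : nat) == 0%N then 1 else 2) * ((-1) ^+ i * x ^+ i * Sq x (k - i))).
  rewrite /Tq !big_ord_recl /= !expr0 subn0 !mul1r -mulr_sumr; ring.
apply: eq_bigr => i _.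
rewrite divpow // sigma2_pow // PoszX p2o_pow // liouville_pow //; rewrite /x; ring.
Qed.

Lemma id2 n : (0 < n)%N -> beta (n * n)%N =
        \sum_(d <- divisors n) (d%:Z * moebius d * sigma2 (n %/ d)%N).
Proof.
have hm : mult (fun d : nat => d%:Z * moebius d) by apply: prod_mult; [exact: idZ_mult|exact: moebius_mult].
apply: (mult_eq _ _ (sqarg_mult _ beta_mult) (conv_mult _ _ hm sigma2_mult)) => p k pp k0 {n}.
rewrite -expnD beta_pow // sum_divisors_pow //.
set x := p%:Z.
transitivity (\sum_(i < k.+1) x ^+ i * (if (i : nat) == 0%N then 1 else if (i : nat) == 1%N then -1 else 0) * Sq x (k - i)); last first.
  apply: eq_bigr => i _.
  by rewrite divpow // sigma2_pow // PoszX moebius_pow.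
case: k k0 => [//|k] _.
rewrite !big_ord_recl big1 /=; last by move=> i _; rewrite mulr0 mul0r.
rewrite addSn addnS ident2 /bump /= subn0 subSS subn0 expr0 expr1; ring.
Qed.

Definition F3 (d n : nat) : int :=
  if (d * d %| n)%N then (d * d)%N%:Z * (2 ^ omega d)%N%:Z * beta2 (n %/ (d * d))%N else 0.

Lemma F3_mult : mult (fun n => \sum_(d <- divisors n) F3 d n).
Proof.
apply: gsum_mult.
  by rewrite /F3 dvdnn divn1 (proj1 beta2_mult) omega1.
move=> m n a b m0 n0 co am bn.
have a0 := dvdn_gt0 m0 am; have b0 := dvdn_gt0 n0 bn.
have cab : coprime a b by exact: coprime_dvdl am (coprime_dvdr bn co).
have caa : coprime (a * a) n by rewrite coprimeMl (coprime_dvdl am co).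
have cbb : coprime (b * b) m by rewrite coprimeMl coprime_sym (coprime_dvdr bn co).
have cab2 : coprime (a * a) (b * b) by rewrite coprimeMl !coprimeMr cab.
rewrite /F3 mulnACA Gauss_dvd // Gauss_dvdl // Gauss_dvdr //.
case ha: (a * a %| m)%N; case hb: (b * b %| n)%N => /=; rewrite ?mulr0 ?mul0r //.
have aa0 : (0 < a * a)%N by rewrite muln_gt0 a0.
have bb0 : (0 < b * b)%N by rewrite muln_gt0 b0.
rewrite divn_mul2 // omegaM // expnD !PoszM (proj2 beta2_mult).
- ring.
- by rewrite divn_gt0 // dvdn_leq.
- by rewrite divn_gt0 // dvdn_leq.
- exact: coprime_dvdl (dvdn_div ha) (coprime_dvdr (dvdn_div hb) co).
Qed.

Lemma id3 n : (0 < n)%N -> beta n * sigma n =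
        \sum_(d <- divisors n | (d * d %| n)%N)
           ((d * d)%N%:Z * (2 ^ omega d)%N%:Z * beta2 (n %/ (d * d))%N).
Proof.
rewrite big_mkcond /=.
apply: (mult_eq _ _ (prod_mult _ _ beta_mult sigma_mult) F3_mult) => p k pp k0 {n}.
rewrite beta_pow // sigma_pow // ident3 sum_divisors_pow //.
set x := p%:Z.
have p1 := prime_gt1 pp.
transitivity (\sum_(i < k.+1) (if (i + i <= k)%N then (x ^+ i) ^+ 2 * (if (i : nat) == 0%N then 1 else 2) * B2q x (k - (i + i)) else 0)); last first.
  apply: eq_bigr => i _; rewrite /F3 -expnD dvdn_Pexp2l //.
  case: ifP => // h.
  by rewrite -expnB ?prime_gt0 // beta2_pow // p2o_pow // PoszX exprD expr2.
rewrite /Uq !big_ord_recl /= subn0 expr0 expr1n !mul1r mulrDr.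
set s1 := \sum_(i < k) _; set s2 := \sum_(i < k) _.
have -> : s2 = 2 * s1.
  rewrite /s1 /s2 mulr_sumr; apply: eq_bigr => i _.
  by case: ifP => _; rewrite ?mulr0 //; ring.
ring.
Qed.

Theorem mainTheorem15 (n : nat) (hn : (0 < n)%N) :
  [/\ beta n ^+ 2 =
        \sum_(d <- divisors n)
           (d%:Z * (2 ^ omega d)%N%:Z * liouville d * sigma2 (n %/ d)%N),
      beta (n * n)%N =
        \sum_(d <- divisors n) (d%:Z * moebius d * sigma2 (n %/ d)%N)
    & beta n * sigma n =
        \sum_(d <- divisors n | (d * d %| n)%N)
           ((d * d)%N%:Z * (2 ^ omega d)%N%:Z * beta2 (n %/ (d * d))%N)].
Proof. by split; [apply: id1 | apply: id2 | apply: id3]. Qed.
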